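(* Let $k$ be an infinite field of characteristic $0$. (i) If $W=W(X,Y)\in\Xi'$, $H=(L,V)\in\Xi$, and $(T_1,T_2)$ is an $H$-closed congruence of $W$, then $T_1\oplus T_2\subseteq\mathcal{F}(W)$ is an $\mathcal{F}(H)$-closed congruence. (ii) If $F(M)\in\mathrm{Ob}\,\Theta^0$, $(N,p)\in\Theta$, and $T\subseteq F(M)$ is an $N$-closed congruence, then $(T\cap\ker p,\,T\cap\mathrm{im}\,p)\subseteq\mathcal{F}^{-1}(F(M))$ is an $\mathcal{F}^{-1}(N)$-closed congruence (here $p$ in $\ker p$, $\mathrm{im}\,p$ is the projection of $F(M)$). (iii) The maps $\mathcal{F}_{W,H}:Cl_H(W)\to Cl_{\mathcal{F}(H)}(\mathcal{F}(W))$, $(T_1,T_2)\mapsto T_1\oplus T_2$, and $\mathcal{F}^{-1}_{F(M),N}:Cl_N(F(M))\to Cl_{\mathcal{F}^{-1}(N)}(\mathcal{F}^{-1}(F(M)))$, $T\mapsto(T\cap\ker p,T\cap\mathrm{im}\,p)$, are bijections.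
   Context: Representations $(L,V)$ (Lie algebra $L$ over $k$, $L$-module $V$) with homomorphisms $(\varphi,\psi)$ ($\varphi$ Lie homomorphism, $\psi$ linear, $\varphi(l)\circ\psi(v)=\psi(l\circ v)$) form $\Xi$. $W(X,Y)=(L(X),A(X)Y)$ is the free representation ($L(X)$ free Lie algebra, $A(X)$ free unital associative algebra, $A(X)Y$ free $A(X)$-module with basis $Y$); $\Xi'$ is the set of $W(X,Y)$ with $X,Y$ finite subsets of fixed countable sets and $|X|=|Y|$. A Lie algebra with projection-derivation is a Lie algebra $M$ with linear $p$, $p^2=p$, $p[m_1,m_2]=[pm_1,m_2]+[m_1,pm_2]$; these form the variety $\Theta$ (homomorphisms commute with $p$), and $\Theta^0$ consists of the free algebras $F(M)$ of $\Theta$ on finite subsets $M$ of a fixed countable set. $\mathcal{F}(L,V)=(L\oplus V,p_V)$ with $[l_1+v_1,l_2+v_2]=[l_1,l_2]+l_1\circ v_2-l_2\circ v_1$, $p_V(l+v)=v$; $\mathcal{F}^{-1}(M,p)=(\ker p,\mathrm{im}\,p)$ with $l\circ v=[l,v]$. Closedness: for an algebra $H$ and a free object $W$ (of either kind) and a subset $T$ of $W$ (a pair $(T_1,T_2)$ of subsets of the two sorts in the representation case), $T'_H$ is the set of homomorphisms $W\to H$ whose kernel contains $T$ (sortwise), $T''_H$ is the (sortwise) intersection of their kernels, $T$ is $H$-closed if $T''_H=T$, and $Cl_H(W)$ is the set of $H$-closed subsets of $W$. *)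

(* Defs.v *)
From HB Require Import structures.
From mathcomp Require Import all_boot all_algebra.
From mathcomp Require Import boolp.
Set Implicit Arguments. Unset Strict Implicit. Unset Printing Implicit Defensive.
Import GRing.Theory.
Local Open Scope ring_scope.

Section Defs.
Variable k : fieldType.

Record LieD := { lcar : lmodType k; lbr : lcar -> lcar -> lcar }.

Definition linmap (U V : lmodType k) (f : U -> V) :=
  forall (a : k) (x y : U), f (a *: x + y) = a *: f x + f y.

Definition bilin (U V W : lmodType k) (b : U -> V -> W) :=
  (forall u, linmap (b u)) /\ (forall v, linmap (fun u => b u v)).

Definition is_lie (L : LieD) :=
  [/\ bilin (@lbr L),
      forall x : lcar L, lbr x x = 0 &
      forall x y z : lcar L,
        lbr x (lbr y z) + lbr y (lbr z x) + lbr z (lbr x y) = 0].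

Definition lie_hom (L L' : LieD) (f : lcar L -> lcar L') :=
  linmap f /\ forall x y, f (lbr x y) = lbr (f x) (f y).

Record ReprD := { rL : LieD; rV : lmodType k; ract : lcar rL -> rV -> rV }.

Definition is_repr (H : ReprD) :=
  [/\ is_lie (rL H), bilin (@ract H) &
      forall (l1 l2 : lcar (rL H)) (v : rV H),
        ract (lbr l1 l2) v = ract l1 (ract l2 v) - ract l2 (ract l1 v)].

Definition rhom (W H : ReprD) (phi : lcar (rL W) -> lcar (rL H))
    (psi : rV W -> rV H) :=
  [/\ lie_hom phi, linmap psi &
      forall l v, ract (phi l) (psi v) = psi (ract l v)].

(* W is the free representation W(X,Y) = (L(X), A(X)Y) on the generating
   sets X (Lie sort) and Y (module sort): universal property in Xi. *)
Definition free_repr (X Y : Type) (W : ReprD)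
    (ix : X -> lcar (rL W)) (iy : Y -> rV W) :=
  is_repr W /\
  forall H : ReprD, is_repr H ->
  forall (f : X -> lcar (rL H)) (g : Y -> rV H),
  exists phi psi,
    [/\ @rhom W H phi psi, (forall x, phi (ix x) = f x),
        (forall y, psi (iy y) = g y) &
        forall phi' psi', @rhom W H phi' psi' ->
          (forall x, phi' (ix x) = f x) -> (forall y, psi' (iy y) = g y) ->
          (forall l, phi' l = phi l) /\ (forall v, psi' v = psi v)].

Definition subspace (U : lmodType k) (T : U -> Prop) :=
  T 0 /\ forall (a : k) x y, T x -> T y -> T (a *: x + y).

Definition rcong (W : ReprD) (T1 : lcar (rL W) -> Prop) (T2 : rV W -> Prop) :=
  [/\ subspace T1, subspace T2,
      (forall l t, T1 t -> T1 (lbr l t)),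
      (forall l v, T2 v -> T2 (ract l v)) &
      (forall t v, T1 t -> T2 (ract t v))].

(* H-closedness: (T1,T2)''_H = (T1,T2), where (T1,T2)''_H is the sortwise
   intersection of the kernels of all homs W -> H whose kernel contains T *)
Definition rclosed (W H : ReprD) (T1 : lcar (rL W) -> Prop) (T2 : rV W -> Prop) :=
  (forall l, T1 l <->
     (forall phi psi, @rhom W H phi psi ->
        (forall t, T1 t -> phi t = 0) -> (forall t, T2 t -> psi t = 0) ->
        phi l = 0)) /\
  (forall v, T2 v <->
     (forall phi psi, @rhom W H phi psi ->
        (forall t, T1 t -> phi t = 0) -> (forall t, T2 t -> psi t = 0) ->
        psi v = 0)).

Record LiePD := { pL : LieD; pp : {linear lcar pL -> lcar pL} }.

Definition is_liep (N : LiePD) :=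
  [/\ is_lie (pL N), (forall x, pp N (pp N x) = pp N x) &
      forall x y, pp N (lbr x y) = lbr (pp N x) y + lbr x (pp N y)].

Definition phom (N N' : LiePD) (f : lcar (pL N) -> lcar (pL N')) :=
  lie_hom f /\ forall x, f (pp N x) = pp N' (f x).

Definition free_liep (M : Type) (F : LiePD) (iM : M -> lcar (pL F)) :=
  is_liep F /\
  forall N : LiePD, is_liep N -> forall g : M -> lcar (pL N),
  exists h, [/\ @phom F N h, (forall m, h (iM m) = g m) &
     forall h', @phom F N h' -> (forall m, h' (iM m) = g m) ->
       forall x, h' x = h x].

Definition pcong (N : LiePD) (T : lcar (pL N) -> Prop) :=
  [/\ subspace T, (forall x t, T t -> T (lbr x t)) &
      (forall t, T t -> T (pp N t))].

Definition pclosed (F N : LiePD) (T : lcar (pL F) -> Prop) :=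
  forall x, T x <->
    (forall h, @phom F N h -> (forall t, T t -> h t = 0) -> h x = 0).

Section FunctorF.
Variable H : ReprD.
Local Notation FL := (lcar (rL H) * rV H)%type.
Definition Fbr (x y : FL) : FL :=
  (lbr x.1 y.1, ract x.1 y.2 - ract y.1 x.2).
Definition pV (x : FL) : FL := (0, x.2).
Fact pV_linear : linear pV.
Proof.
move=> a x y; rewrite /pV /=.
have e : forall u : FL, u = (u.1, u.2) by case.
rewrite [RHS]e; congr pair => //.
by rewrite /= GRing.scaler0 GRing.addr0.
Qed.
HB.instance Definition _ := GRing.isLinear.Build k FL FL *:%R pV pV_linear.
Definition Ffun : LiePD :=
  {| pL := {| lcar := FL; lbr := Fbr |}; pp := pV |}.
End FunctorF.

Definition dsum (H : ReprD) (T1 : lcar (rL H) -> Prop) (T2 : rV H -> Prop)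
  : lcar (pL (Ffun H)) -> Prop := fun x => T1 x.1 /\ T2 x.2.

Section FunctorFinv.
Variable N : LiePD.
Let M := lcar (pL N).
Let p := pp N.

Definition kerp_pred : {pred M} := fun x => p x == 0.
Fact kerp_closed : GRing.subsemimod_closed kerp_pred.
Proof.
split; first split.
- by rewrite unfold_in /kerp_pred /= GRing.linear0.
- move=> x y; rewrite !unfold_in /kerp_pred /= => /eqP hx /eqP hy.
  by rewrite GRing.linearD hx hy GRing.addr0.
- move=> a x; rewrite !unfold_in /kerp_pred /= => /eqP hx.
  by rewrite GRing.linearZ_LR hx GRing.scaler0.
Qed.
HB.instance Definition _ := GRing.isSubmodClosed.Build k M kerp_pred kerp_closed.
Inductive kerT : Type := KerT (x : M) of x \in kerp_pred.
Definition kerval (u : kerT) : M := let: KerT x _ := u in x.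
HB.instance Definition _ := [isSub of kerT for kerval].
HB.instance Definition _ := [Choice of kerT by <:].
HB.instance Definition _ := [SubChoice_isSubLmodule of kerT by <:].

Definition imp_pred : {pred M} := fun x => `[< exists y, p y = x >].
Fact imp_closed : GRing.subsemimod_closed imp_pred.
Proof.
split; first split.
- by rewrite unfold_in /imp_pred; apply/asboolP; exists 0; rewrite GRing.linear0.
- move=> x y; rewrite !unfold_in /imp_pred => /asboolP [x' <-] /asboolP [y' <-].
  by apply/asboolP; exists (x' + y'); rewrite GRing.linearD.
- move=> a x; rewrite !unfold_in /imp_pred => /asboolP [x' <-].
  by apply/asboolP; exists (a *: x'); rewrite GRing.linearZ.
Qed.
HB.instance Definition _ := GRing.isSubmodClosed.Build k M imp_pred imp_closed.
Inductive imT : Type := ImT (x : M) of x \in imp_pred.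
Definition imval (u : imT) : M := let: ImT x _ := u in x.
HB.instance Definition _ := [isSub of imT for imval].
HB.instance Definition _ := [Choice of imT by <:].
HB.instance Definition _ := [SubChoice_isSubLmodule of imT by <:].

(* restricted bracket and action; for N in Theta the bracket of M maps
   ker p x ker p into ker p and ker p x im p into im p, so insubd is the
   genuine restriction (the default 0 is never used). *)
Definition kerbr (x y : kerT) : kerT := insubd (0 : kerT) (lbr (kerval x) (kerval y)).
Definition imact (x : kerT) (v : imT) : imT := insubd (0 : imT) (lbr (kerval x) (imval v)).

Definition Finv : ReprD :=
  {| rL := {| lcar := kerT; lbr := kerbr |}; rV := imT; ract := imact |}.
End FunctorFinv.

Definition kerpart (F : LiePD) (T : lcar (pL F) -> Prop)
  : lcar (rL (Finv F)) -> Prop := fun x => T (kerval x).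
Definition impart (F : LiePD) (T : lcar (pL F) -> Prop)
  : rV (Finv F) -> Prop := fun v => T (imval v).

End Defs.

Arguments free_repr {k X Y} W ix iy.
Arguments rcong {k W} T1 T2.
Arguments rclosed {k W} H T1 T2.
Arguments pcong {k N} T.
Arguments pclosed {k F} N T.
Arguments free_liep {k M} F iM.
Arguments dsum {k H} T1 T2.
Arguments kerpart {k F} T.
Arguments impart {k F} T.
Arguments Ffun {k} H.
Arguments Finv {k} N.
Arguments is_repr {k} H.
Arguments is_liep {k} N.

(* Main.v *)
Require Import Defs.
From HB Require Import structures.
From mathcomp Require Import all_boot all_algebra.
From mathcomp Require Import boolp.
Import GRing.Theory.
Local Open Scope ring_scope.
Set Implicit Arguments. Unset Strict Implicit. Unset Printing Implicit Defensive.

Section Gen.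
Variable k : fieldType.

Lemma lin0 (U V : lmodType k) (f : U -> V) : linmap f -> f 0 = 0.
Proof.
move=> hf; have h := hf 1 0 0; rewrite !scale1r addr0 in h.
by apply: (addrI (f 0)); rewrite addr0 -h.
Qed.
Lemma linD (U V : lmodType k) (f : U -> V) : linmap f -> forall x y, f (x + y) = f x + f y.
Proof. by move=> hf x y; have := hf 1 x y; rewrite !scale1r. Qed.
Lemma linZ (U V : lmodType k) (f : U -> V) : linmap f -> forall a x, f (a *: x) = a *: f x.
Proof. by move=> hf a x; have := hf a x 0; rewrite addr0 (lin0 hf) addr0. Qed.
Lemma linN (U V : lmodType k) (f : U -> V) : linmap f -> forall x, f (- x) = - f x.
Proof. by move=> hf x; rewrite -scaleN1r (linZ hf) scaleN1r. Qed.
Lemma linB (U V : lmodType k) (f : U -> V) : linmap f -> forall x y, f (x - y) = f x - f y.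
Proof. by move=> hf x y; rewrite (linD hf) (linN hf). Qed.

Lemma subD (U : lmodType k) (T : U -> Prop) : subspace T -> forall x y, T x -> T y -> T (x + y).
Proof. by move=> hT x y hx hy; have := hT.2 1 x y hx hy; rewrite scale1r. Qed.
Lemma subZ (U : lmodType k) (T : U -> Prop) : subspace T -> forall a x, T x -> T (a *: x).
Proof. by move=> hT a x hx; have := hT.2 a x 0 hx hT.1; rewrite addr0. Qed.
Lemma subN (U : lmodType k) (T : U -> Prop) : subspace T -> forall x, T x -> T (- x).
Proof. by move=> hT x hx; rewrite -scaleN1r; apply: subZ. Qed.
Lemma subB (U : lmodType k) (T : U -> Prop) : subspace T -> forall x y, T x -> T y -> T (x - y).
Proof. by move=> hT x y hx hy; apply: subD => //; apply: subN. Qed.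

Lemma bil_r (U V W : lmodType k) (b : U -> V -> W) : bilin b -> forall u, linmap (b u).
Proof. by case. Qed.
Lemma bil_l (U V W : lmodType k) (b : U -> V -> W) : bilin b -> forall v, linmap (fun u => b u v).
Proof. by case. Qed.

Lemma lie_bil (L : LieD k) : is_lie L -> bilin (@lbr k L).
Proof. by case. Qed.

Lemma lie_anti (L : LieD k) : is_lie L -> forall x y : lcar L, lbr x y = - lbr y x.
Proof.
move=> hL x y; have [hb h0 _] := hL.
have := h0 (x + y).
rewrite (linD (bil_l hb _)) !(linD (bil_r hb _)) !h0 add0r addr0.
by move/eqP; rewrite addr_eq0 => /eqP.
Qed.

Lemma pair_eq (A B : lmodType k) (u v : A * B) : u.1 = v.1 -> u.2 = v.2 -> u = v.
Proof. by case: u => a b; case: v => c d /= -> ->. Qed.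

End Gen.

Section PartI.
Variable k : fieldType.

Lemma dsum_pcong (W : ReprD k) (T1 : lcar (rL W) -> Prop) (T2 : rV W -> Prop) : rcong T1 T2 -> pcong (dsum T1 T2).
Proof.
case=> [s1 s2 i1 i2 i12]; split.
- split; first by split; [exact: s1.1 | exact: s2.1].
  by move=> a x y [hx1 hx2] [hy1 hy2]; split; [exact: s1.2 | exact: s2.2].
- move=> x t [ht1 ht2]; split.
  + exact: i1.
  + by apply: (subB s2); [exact: i2 | exact: i12].
- by move=> t [_ ht2]; split; [exact: s1.1 | exact: ht2].
Qed.

Lemma pair_phom (W H : ReprD k) phi psi : rhom phi psi ->
  @phom k (Ffun W) (Ffun H) (fun x => (phi x.1, psi x.2)).
Proof.
case=> [[hl hb] hs ha]; split; first split.
- by move=> a x y; apply: pair_eq => /=; rewrite ?hl ?hs.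
- move=> x y; apply: pair_eq => /=; first by rewrite hb.
  by rewrite (linB hs) -!ha.
- by move=> x; apply: pair_eq => //=; rewrite (lin0 hl).
Qed.

Lemma rclosed_pclosed (W H : ReprD k) (T1 : lcar (rL W) -> Prop) (T2 : rV W -> Prop) :
  rclosed H T1 T2 -> pclosed (Ffun H) (@dsum k W T1 T2).
Proof.
case=> c1 c2 x; split.
- by move=> hx h _ hk; exact: hk.
- move=> hall; split.
  + apply/c1 => phi psi hr k1 k2.
    have := hall _ (pair_phom hr) _.
    move=> /(_ _) /(congr1 fst) /= -> //.
    by move=> t [t1 t2]; rewrite k1 // k2.
  + apply/c2 => phi psi hr k1 k2.
    have := hall _ (pair_phom hr) _.
    move=> /(_ _) /(congr1 snd) /= -> //.
    by move=> t [t1 t2]; rewrite k1 // k2.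
Qed.

Lemma rclosed0 (W H : ReprD k) (T1 : lcar (rL W) -> Prop) (T2 : rV W -> Prop) : rclosed H T1 T2 -> T1 0 /\ T2 0.
Proof.
case=> c1 c2; split; [apply/c1 | apply/c2] => phi psi [[hl _] hs _] _ _.
  exact: lin0 hl.
exact: lin0 hs.
Qed.

Lemma dsum_inj (W H : ReprD k) (T1 S1 : lcar (rL W) -> Prop) (T2 S2 : rV W -> Prop) : rclosed H T1 T2 -> rclosed H S1 S2 ->
  @dsum k W T1 T2 = dsum S1 S2 -> T1 = S1 /\ T2 = S2.
Proof.
move=> r1 r2 e; have [t1 t2] := rclosed0 r1; have [u1 u2] := rclosed0 r2; split; apply: funext => x; apply: propext.
- split=> h.
  + have : dsum T1 T2 (x, 0) by split.
    by rewrite e; case.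
  + have : dsum S1 S2 (x, 0) by split.
    by rewrite -e; case.
- split=> h.
  + have : dsum T1 T2 (0, x) by split.
    by rewrite e; case.
  + have : dsum S1 S2 (0, x) by split.
    by rewrite -e; case.
Qed.

Lemma pclosed_sub (F N : LiePD k) S : pclosed N S ->
  subspace S /\ (forall x, S x -> S (pp F x)).
Proof.
move=> hS; split; first split.
- by apply/hS => h [[hl _] _] _; exact: lin0 hl.
- move=> a x y sx sy; apply/hS => h [[hl _] _] hk.
  by rewrite hl !hk // scaler0 addr0.
- move=> x sx; apply/hS => h [_ hp] hk.
  by rewrite hp hk // linear0.
Qed.

Lemma unpair_facts (W H : ReprD k) h : @phom k (Ffun W) (Ffun H) h ->
  (forall l, (h (l, 0)).2 = 0) /\ (forall v, (h (0, v)).1 = 0).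
Proof.
case=> [[hl _] hp]; split.
- move=> l; have := hp (l, 0).
  have -> : pp (Ffun W) (l, 0) = 0 by apply: pair_eq.
  by rewrite (lin0 hl) => /(congr1 snd) /= <-.
- move=> v; have := hp (0, v).
  have -> : pp (Ffun W) (0, v) = (0, v) by apply: pair_eq.
  by move=> /(congr1 fst) /= ->.
Qed.

Lemma unpair_rhom (W H : ReprD k) h : is_repr W -> is_repr H ->
  @phom k (Ffun W) (Ffun H) h ->
  rhom (fun l => (h (l, 0)).1) (fun v => (h (0, v)).2).
Proof.
move=> [hW hWb _] [hH hHb _] hh; have [f1 f2] := unpair_facts hh.
case: hh => [[hl hb] hp].
have [hWl _ _] := hW.
split; first split.
- move=> a x y.
  have -> : ((a *: x + y, 0) : lcar (pL (Ffun W))) = a *: (x, 0) + (y, 0).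
    by apply: pair_eq => //=; rewrite scaler0 addr0.
  by rewrite hl.
- move=> x y.
  have -> : ((lbr x y, 0) : lcar (pL (Ffun W))) = lbr ((x, 0) : lcar (pL (Ffun W))) (y, 0).
    by apply: pair_eq => //=; rewrite !(lin0 (bil_r hWb _)) subrr.
  by rewrite hb.
- move=> a x y.
  have -> : ((0, a *: x + y) : lcar (pL (Ffun W))) = a *: (0, x) + (0, y).
    by apply: pair_eq => //=; rewrite scaler0 addr0.
  by rewrite hl.
- move=> l v.
  have -> : ((0, ract l v) : lcar (pL (Ffun W))) = lbr ((l, 0) : lcar (pL (Ffun W))) (0, v).
    apply: pair_eq => /=; first by rewrite (lin0 (bil_r hWl _)).
    by rewrite (lin0 (bil_r hWb _)) subr0.
  rewrite hb /= f1 (lin0 (bil_r hHb _)) subr0.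
  done.
Qed.

Lemma pclosed_split (W H : ReprD k) S : pclosed (Ffun H) S ->
  forall x : lcar (pL (Ffun W)), S x <-> S (x.1, 0) /\ S (0, x.2).
Proof.
move=> hS; have [hs hp] := pclosed_sub hS => x; split.
- move=> sx; have s2 : S (0, x.2) by exact: hp _ sx.
  split => //.
  have -> : ((x.1, 0) : lcar (pL (Ffun W))) = x - (0, x.2).
    by apply: pair_eq => //=; rewrite ?subr0 ?subrr.
  exact: subB.
- case=> s1 s2.
  have -> : x = (x.1, 0) + (0, x.2) by apply: pair_eq => /=; rewrite ?addr0 ?add0r.
  exact: subD.
Qed.

Lemma dsum_surj (W H : ReprD k) S : is_repr W -> is_repr H -> pclosed (Ffun H) S ->
  exists T1 T2, rclosed H T1 T2 /\ @dsum k W T1 T2 = S.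
Proof.
move=> hW hH hS.
exists (fun l => S (l, 0)), (fun v => S (0, v)).
have hsp := pclosed_split hS.
split; last first.
  apply: funext => x; apply: propext; rewrite hsp; done.
split.
- move=> l; split.
  + move=> sl phi psi hr k1 k2.
    have := proj1 (hS (l, 0)) sl _ (pair_phom hr).
    move=> /(_ _) /(congr1 fst) /= -> //.
    by move=> t /hsp [t1 t2]; apply: pair_eq => /=; [rewrite k1 | rewrite k2].
  + move=> hall; apply/hS => h hh hk.
    have [f1 f2] := unpair_facts hh.
    have e := hall _ _ (unpair_rhom hW hH hh).
    apply: pair_eq; last by rewrite f1.
    apply: e => t ht; rewrite /= hk //.
- move=> v; split.
  + move=> sv phi psi hr k1 k2.
    have := proj1 (hS (0, v)) sv _ (pair_phom hr).
    move=> /(_ _) /(congr1 snd) /= -> //.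
    by move=> t /hsp [t1 t2]; apply: pair_eq => /=; [rewrite k1 | rewrite k2].
  + move=> hall; apply/hS => h hh hk.
    have [f1 f2] := unpair_facts hh.
    have e := hall _ _ (unpair_rhom hW hH hh).
    apply: pair_eq; first by rewrite f2.
    apply: e => t ht; rewrite /= hk //.
Qed.

End PartI.

Section PartII.
Variable k : fieldType.

Section OneN.
Variable N : LiePD k.

Lemma kerP (u : kerT N) : pp N (kerval u) = 0.
Proof. by case: u => x /=; rewrite unfold_in => /eqP. Qed.
Lemma imP (u : imT N) : exists y, pp N y = imval u.
Proof. by case: u => x /=; rewrite unfold_in => /asboolP. Qed.
Lemma memK x : pp N x = 0 -> x \in @kerp_pred k N.
Proof. by move=> h; rewrite unfold_in h. Qed.
Lemma memI x y : pp N y = x -> x \in @imp_pred k N.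
Proof. by move=> h; rewrite unfold_in; apply/asboolP; exists y. Qed.
Lemma kerval_insubd x : pp N x = 0 -> kerval (insubd (0 : kerT N) x) = x.
Proof. by move=> h; exact: (insubdK 0 (memK h)). Qed.
Lemma imval_insubd x y : pp N y = x -> imval (insubd (0 : imT N) x) = x.
Proof. by move=> h; exact: (insubdK 0 (memI h)). Qed.
Lemma kerval_inj : injective (@kerval k N).
Proof. exact: val_inj. Qed.
Lemma imval_inj : injective (@imval k N).
Proof. exact: val_inj. Qed.
Lemma kervalL a (u v : kerT N) : kerval (a *: u + v) = a *: kerval u + kerval v.
Proof. by []. Qed.
Lemma imvalL a (u v : imT N) : imval (a *: u + v) = a *: imval u + imval v.
Proof. by []. Qed.
Lemma imvalB (u v : imT N) : imval (u - v) = imval u - imval v.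
Proof. by []. Qed.
Lemma kerval0 : kerval (0 : kerT N) = 0. Proof. by []. Qed.
Lemma imval0 : imval (0 : imT N) = 0. Proof. by []. Qed.

Hypothesis hN : is_liep N.

Lemma ppI (u : imT N) : pp N (imval u) = imval u.
Proof. have [y <-] := imP u; by case: hN => _ -> _. Qed.

Lemma NL : is_lie (pL N). Proof. by case: hN. Qed.
Lemma Nder x y : pp N (lbr x y) = lbr (pp N x) y + lbr x (pp N y).
Proof. by case: hN. Qed.
Lemma Nidem x : pp N (pp N x) = pp N x.
Proof. by case: hN. Qed.
Lemma Nbr0r x : lbr x 0 = 0 :> lcar (pL N).
Proof. exact: (lin0 (bil_r (lie_bil NL) _)). Qed.
Lemma Nbr0l x : lbr 0 x = 0 :> lcar (pL N).
Proof. exact: (lin0 (bil_l (lie_bil NL) _)). Qed.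

Lemma kerbrE (x y : kerT N) : kerval (kerbr x y) = lbr (kerval x) (kerval y).
Proof. by apply: kerval_insubd; rewrite Nder !kerP Nbr0l Nbr0r addr0. Qed.
Lemma imactE (x : kerT N) (v : imT N) : imval (imact x v) = lbr (kerval x) (imval v).
Proof.
apply: (@imval_insubd _ (lbr (kerval x) (imval v))).
by rewrite Nder kerP ppI Nbr0l add0r.
Qed.

Lemma kerim0 (a : kerT N) (b : imT N) : kerval a + imval b = 0 ->
  kerval a = 0 /\ imval b = 0.
Proof.
move=> e; have := congr1 (pp N) e.
rewrite linearD kerP ppI add0r linear0 => eb.
by split => //; move: e; rewrite eb addr0.
Qed.
End OneN.

Section Res.
Variables F N : LiePD k.
Hypotheses (hF : is_liep F) (hN : is_liep N).
Variable h : lcar (pL F) -> lcar (pL N).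
Hypothesis hh : phom h.

Definition resK (u : kerT F) : kerT N := insubd 0 (h (kerval u)).
Definition resI (u : imT F) : imT N := insubd 0 (h (imval u)).

Lemma resKE u : kerval (resK u) = h (kerval u).
Proof.
apply: kerval_insubd; case: hh => [[hl _] hp].
by rewrite -hp kerP (lin0 hl).
Qed.
Lemma resIE u : imval (resI u) = h (imval u).
Proof.
have [y ey] := imP u.
apply: (@imval_insubd _ _ (h y)); case: hh => [_ hp].
by rewrite -hp ey.
Qed.

Lemma res_rhom : @rhom k (Finv F) (Finv N) resK resI.
Proof.
case: hh => [[hl hb] hp]; split; first split.
- by move=> a x y; apply: kerval_inj; rewrite kervalL !resKE kervalL hl.
- move=> x y; apply: kerval_inj.
  by rewrite /= (kerbrE hN) !resKE (kerbrE hF) hb.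
- by move=> a x y; apply: imval_inj; rewrite imvalL !resIE imvalL hl.
- by move=> l v; apply: imval_inj; rewrite /= (imactE hN) resKE !resIE (imactE hF) hb.
Qed.
End Res.

Lemma res_rclosed (F N : LiePD k) (T : lcar (pL F) -> Prop) : is_liep F -> is_liep N -> pclosed N T ->
  rclosed (Finv N) (kerpart T) (impart T).
Proof.
move=> hF hN hT; split.
- move=> l; split.
  + by move=> tl phi psi _ k1 _; exact: k1.
  + move=> hall; apply/hT => h hh hk.
    have := hall _ _ (res_rhom hF hN hh).
    move=> /(_ _ _) /(congr1 (@kerval k N)).
    rewrite resKE // => -> //.
    * by move=> t ht; apply: kerval_inj; rewrite resKE // hk.
    * by move=> t ht; apply: imval_inj; rewrite resIE // hk.
- move=> v; split.
  + by move=> tv phi psi _ _ k2; exact: k2.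
  + move=> hall; apply/hT => h hh hk.
    have := hall _ _ (res_rhom hF hN hh).
    move=> /(_ _ _) /(congr1 (@imval k N)).
    rewrite resIE // => -> //.
    * by move=> t ht; apply: kerval_inj; rewrite resKE // hk.
    * by move=> t ht; apply: imval_inj; rewrite resIE // hk.
Qed.

Lemma kerpart_rcong (F : LiePD k) (T : lcar (pL F) -> Prop) : is_liep F -> pcong T ->
  rcong (kerpart T) (impart T).
Proof.
move=> hF [hs hi _]; split.
- by split; [exact: hs.1 | move=> a x y; exact: hs.2].
- by split; [exact: hs.1 | move=> a x y; exact: hs.2].
- by move=> l t ht; rewrite /kerpart /= kerbrE //; apply: hi.
- by move=> l v hv; rewrite /impart /= imactE //; apply: hi.
- move=> t v ht; rewrite /impart /= imactE //.
  rewrite (lie_anti (NL hF)); apply: (subN hs); exact: hi.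
Qed.

End PartII.

Section PartIII.
Variable k : fieldType.
Hypothesis two : (2%:R : k) != 0.

Section OneF.
Variable F : LiePD k.
Hypothesis hF : is_liep F.

Definition kp (x : lcar (pL F)) : kerT F := insubd 0 (x - pp F x).
Definition ip (x : lcar (pL F)) : imT F := insubd 0 (pp F x).

Lemma kpE x : kerval (kp x) = x - pp F x.
Proof. by apply: kerval_insubd; rewrite linearB (Nidem hF) subrr. Qed.
Lemma ipE x : imval (ip x) = pp F x.
Proof. exact: (@imval_insubd _ F _ x). Qed.

Lemma kpL a x y : kp (a *: x + y) = a *: kp x + kp y.
Proof.
apply: kerval_inj; rewrite kervalL !kpE linearP.
by rewrite scalerBr opprD addrACA.
Qed.
Lemma ipL a x y : ip (a *: x + y) = a *: ip x + ip y.
Proof. by apply: imval_inj; rewrite imvalL !ipE linearP. Qed.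

Lemma decompE x : x = kerval (kp x) + imval (ip x).
Proof. by rewrite kpE ipE subrK. Qed.

Lemma kp_ker (l : kerT F) : kp (kerval l) = l.
Proof. by apply: kerval_inj; rewrite kpE kerP subr0. Qed.
Lemma ip_ker (l : kerT F) : ip (kerval l) = 0.
Proof. by apply: imval_inj; rewrite ipE kerP. Qed.
Lemma kp_im (v : imT F) : kp (imval v) = 0.
Proof. by apply: kerval_inj; rewrite kpE (ppI hF) subrr. Qed.
Lemma ip_im (v : imT F) : ip (imval v) = v.
Proof. by apply: imval_inj; rewrite ipE (ppI hF). Qed.
Lemma kp_pp x : kp (pp F x) = 0.
Proof. by apply: kerval_inj; rewrite kpE (Nidem hF) subrr. Qed.
Lemma ip_pp x : ip (pp F x) = ip x.
Proof. by apply: imval_inj; rewrite !ipE (Nidem hF). Qed.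

Lemma brII b d : pp F b = b -> pp F d = d -> lbr b d = 0.
Proof.
move=> eb ed; set c := lbr b d.
have e1 : pp F c = c + c by rewrite /c (Nder hF) eb ed.
have e2 : c + c = 0.
  have := Nidem hF c; rewrite e1 linearD e1 => e.
  by apply: (addrI (c + c)); rewrite addr0.
have : (2%:R : k) *: c == 0 by rewrite scaler_nat mulr2n e2.
by rewrite scaler_eq0 (negbTE two) => /eqP.
Qed.

Lemma br_split a b c d : pp F a = 0 -> pp F c = 0 -> pp F b = b -> pp F d = d ->
  lbr (a + b) (c + d) = lbr a c + (lbr a d - lbr c b).
Proof.
move=> ha hc hb hd; have hL := lie_bil (NL hF).
rewrite (linD (bil_l hL _)) !(linD (bil_r hL _)) (brII hb hd) addr0.
rewrite [lbr b c](lie_anti (NL hF)) -addrA.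
done.
Qed.

Lemma br_splitK a b c d : pp F a = 0 -> pp F c = 0 -> pp F b = b -> pp F d = d ->
  pp F (lbr a c) = 0 /\ pp F (lbr a d - lbr c b) = lbr a d - lbr c b.
Proof.
move=> ha hc hb hd; split.
  by rewrite (Nder hF) ha hc (Nbr0l hF) (Nbr0r hF) addr0.
by rewrite linearB !(Nder hF) ha hc hb hd !(Nbr0l hF) !add0r.
Qed.

Lemma kp_br x y : kp (lbr x y) = kerbr (kp x) (kp y).
Proof.
apply: kerval_inj; rewrite (kerbrE hF) kpE.
have ha := kerP (kp x); have hc := kerP (kp y).
have hb := ppI hF (ip x); have hd := ppI hF (ip y).
rewrite {1 2}(decompE x) {1 2}(decompE y) br_split //.
have [e1 e2] := br_splitK ha hc hb hd.
by rewrite linearD e1 e2 add0r addrK.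
Qed.

Lemma ip_br x y : ip (lbr x y) = imact (kp x) (ip y) - imact (kp y) (ip x).
Proof.
apply: imval_inj; rewrite imvalB !(imactE hF) ipE.
have ha := kerP (kp x); have hc := kerP (kp y).
have hb := ppI hF (ip x); have hd := ppI hF (ip y).
rewrite {1}(decompE x) {1}(decompE y) br_split //.
have [e1 e2] := br_splitK ha hc hb hd.
by rewrite linearD e1 e2 add0r.
Qed.
End OneF.

Section Glue.
Variables F N : LiePD k.
Hypotheses (hF : is_liep F) (hN : is_liep N).
Variables (phi : kerT F -> kerT N) (psi : imT F -> imT N).
Hypothesis hr : @rhom k (Finv F) (Finv N) phi psi.

Definition glue (x : lcar (pL F)) : lcar (pL N) :=
  kerval (phi (kp x)) + imval (psi (ip x)).

Lemma glue_phom : phom glue.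
Proof.
case: hr => [[hl hb] hs ha]; split; first split.
- move=> a x y; rewrite /glue (kpL hF). rewrite (@ipL F a x y) hl hs kervalL imvalL.
  by rewrite scalerDr addrACA.
- move=> x y; rewrite /glue (kp_br hF) (ip_br hF).
  have -> : phi (kerbr (kp x) (kp y)) = kerbr (phi (kp x)) (phi (kp y)) by exact: hb.
  rewrite (kerbrE hN) (linB hs).
  have hpa : forall l v, psi (imact l v) = imact (phi l) (psi v).
    by move=> l v; rewrite -ha.
  rewrite !hpa imvalB !(imactE hN) br_split //.
  + exact: kerP.
  + exact: kerP.
  + exact: (ppI hN).
  + exact: (ppI hN).
- move=> x; rewrite /glue kp_pp // ip_pp //.
  have -> : phi 0 = 0 by exact: (lin0 hl).
  by rewrite kerval0 add0r linearD kerP add0r (ppI hN).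
Qed.
End Glue.
End PartIII.

Section PartIV.
Variable k : fieldType.
Hypothesis two : (2%:R : k) != 0.

Lemma pclosed_decomp (F N : LiePD k) (T : lcar (pL F) -> Prop) : is_liep F -> pclosed N T ->
  forall x, T x <-> kerpart T (kp x) /\ impart T (ip x).
Proof.
move=> hF hT x; have [hs hp] := pclosed_sub hT.
rewrite /kerpart /impart (kpE hF) ipE; split.
- by move=> tx; split; [apply: subB => //; apply: hp | apply: hp].
- by case=> t1 t2; rewrite -(subrK (pp F x) x); apply: subD.
Qed.

Lemma inj2 (F N : LiePD k) (T S : lcar (pL F) -> Prop) : is_liep F ->
  pclosed N T -> pclosed N S -> kerpart T = kerpart S -> impart T = impart S -> T = S.
Proof.
move=> hF hT hS e1 e2; apply: funext => x; apply: propext.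
by rewrite (pclosed_decomp hF hT) (pclosed_decomp hF hS) e1 e2.
Qed.

Lemma surj2 (F N : LiePD k) (S1 : lcar (rL (Finv F)) -> Prop) (S2 : rV (Finv F) -> Prop) :
  is_liep F -> is_liep N -> rclosed (Finv N) S1 S2 ->
  exists T : lcar (pL F) -> Prop, pclosed N T /\ kerpart T = S1 /\ impart T = S2.
Proof.
move=> hF hN hS; have [s1 s2] := rclosed0 hS.
exists (fun x => S1 (kp x) /\ S2 (ip x)); split; last split.
- move=> x; split; first by move=> tx h _ hk; exact: hk.
  move=> hall; have [c1 c2] := hS.
  have key : forall phi psi, @rhom k (Finv F) (Finv N) phi psi ->
      (forall t, S1 t -> phi t = 0) -> (forall t, S2 t -> psi t = 0) ->
      phi (kp x) = 0 /\ psi (ip x) = 0.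
    move=> phi psi hr k1 k2.
    have hk : forall t, S1 (kp t) /\ S2 (ip t) -> glue phi psi t = 0.
      by move=> t [t1 t2]; rewrite /glue k1 // k2 // kerval0 imval0 addr0.
    have [e1 e2] := kerim0 hN (hall _ (glue_phom two hF hN hr) hk).
    by split; [apply: kerval_inj | apply: imval_inj].
  split; [apply/c1 | apply/c2] => phi psi hr k1 k2; have [] := key _ _ hr k1 k2 => //.
- apply: funext => l; apply: propext.
  by rewrite /kerpart (kp_ker hF) (@ip_ker k F l); split; [case | split].
- apply: funext => v; apply: propext.
  by rewrite /impart (kp_im hF) (ip_im hF); split; [case | split].
Qed.
End PartIV.

Unset Implicit Arguments.

Theorem proposition7 (k : fieldType)
  (k_char0 : [pchar k] =i pred0)
  (k_infinite : forall s : seq k, exists x : k, x \notin s) :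
  (* (i) *)
  (forall (X Y : finType) (W : ReprD k)
          (ix : X -> lcar (rL W)) (iy : Y -> rV W),
     #|X| = #|Y| -> free_repr W ix iy ->
   forall H : ReprD k, is_repr H ->
   forall (T1 : lcar (rL W) -> Prop) (T2 : rV W -> Prop),
     rcong T1 T2 -> rclosed H T1 T2 ->
     pcong (dsum T1 T2) /\ pclosed (Ffun H) (dsum T1 T2)) /\
  (* (ii) *)
  (forall (M : finType) (F : LiePD k) (iM : M -> lcar (pL F)),
     free_liep F iM ->
   forall N : LiePD k, is_liep N ->
   forall T : lcar (pL F) -> Prop,
     pcong T -> pclosed N T ->
     rcong (kerpart T) (impart T) /\
     rclosed (Finv N) (kerpart T) (impart T)) /\
  (* (iii) first map: Cl_H(W) -> Cl_{F(H)}(F(W)), (T1,T2) |-> T1 (+) T2 *)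
  (forall (X Y : finType) (W : ReprD k)
          (ix : X -> lcar (rL W)) (iy : Y -> rV W),
     #|X| = #|Y| -> free_repr W ix iy ->
   forall H : ReprD k, is_repr H ->
     (forall (T1 : lcar (rL W) -> Prop) (T2 : rV W -> Prop),
        rclosed H T1 T2 -> pclosed (Ffun H) (dsum T1 T2)) /\
     (forall (T1 S1 : lcar (rL W) -> Prop) (T2 S2 : rV W -> Prop),
        rclosed H T1 T2 -> rclosed H S1 S2 ->
        dsum T1 T2 = dsum S1 S2 -> T1 = S1 /\ T2 = S2) /\
     (forall S : lcar (pL (Ffun W)) -> Prop,
        pclosed (Ffun H) S ->
        exists (T1 : lcar (rL W) -> Prop) (T2 : rV W -> Prop),
          rclosed H T1 T2 /\ dsum T1 T2 = S)) /\
  (* (iii) second map: Cl_N(F(M)) -> Cl_{F^-1(N)}(F^-1(F(M))),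
     T |-> (T cap ker p, T cap im p) *)
  (forall (M : finType) (F : LiePD k) (iM : M -> lcar (pL F)),
     free_liep F iM ->
   forall N : LiePD k, is_liep N ->
     (forall T : lcar (pL F) -> Prop,
        pclosed N T -> rclosed (Finv N) (kerpart T) (impart T)) /\
     (forall T S : lcar (pL F) -> Prop,
        pclosed N T -> pclosed N S ->
        kerpart T = kerpart S -> impart T = impart S -> T = S) /\
     (forall (S1 : lcar (rL (Finv F)) -> Prop) (S2 : rV (Finv F) -> Prop),
        rclosed (Finv N) S1 S2 ->
        exists T : lcar (pL F) -> Prop,
          pclosed N T /\ kerpart T = S1 /\ impart T = S2)).
Proof.
have two : (2%:R : k) != 0 by rewrite ((pcharf0P k).1 k_char0 2).
split; last split; last split.
- move=> X Y W ix iy _ hW H hH T1 T2 hc hcl; split.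
  + exact: dsum_pcong.
  + exact: rclosed_pclosed.
- move=> M F iM [hF _] N hN T hc hcl; split.
  + exact: kerpart_rcong.
  + exact: res_rclosed.
- move=> X Y W ix iy _ [hW _] H hH; split; last split.
  + move=> T1 T2; exact: rclosed_pclosed.
  + move=> T1 S1 T2 S2; exact: dsum_inj.
  + move=> S hS; exact: dsum_surj.
- move=> M F iM [hF _] N hN; split; last split.
  + move=> T; exact: res_rclosed.
  + move=> T S; exact: inj2.
  + move=> S1 S2; exact: surj2.
Qed.
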